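(* Let $d\ge3$ and $h\ge1$. The Hall $(d-1)$-subgroup of the sandpile group $G(d,h)$ is cyclic of order $(d-1)^h$.
   Context: Let $\mathcal{T}(d,h)$ be the rooted tree in which the root $0$ has $d$ children, every vertex at distance $1,\dots,h-1$ from the root has $d-1$ children, and the vertices at distance $h$ are leaves. Let $V$ be its vertex set, $A$ its adjacency matrix, $\Delta := dI-A$, and $\Lambda\subset\mathbb{Z}^V$ the lattice spanned by the rows of $\Delta$. Then $G(d,h):=\mathbb{Z}^V/\Lambda$. For a finite group $G$, a subgroup $H$ is a Hall subgroup if $\gcd(|H|,|G:H|)=1$; it is a Hall $t$-subgroup if moreover $|H|$ and $t$ have the same set of prime divisors. A finite abelian group has a unique Hall $t$-subgroup for each $t$ dividing its order (here the Hall $(d-1)$-subgroup is the product of the Sylow $p$-subgroups for primes $p\mid d-1$). *)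

(* Defs.v *)
From mathcomp Require Import all_boot all_order all_algebra.
Set Implicit Arguments. Unset Strict Implicit. Unset Printing Implicit Defensive.
Import GRing.Theory Num.Theory.

(* ---------- The tree T(d,h) ----------
   A vertex is the path from the root, encoded as the sequence of child
   indices: the root is the empty sequence; the first entry is < d (the root
   has d children), later entries are < d-1 (other inner vertices have d-1
   children); the length (= depth) is at most h. *)
Definition raw_vertex (d h : nat) := {k : 'I_h.+1 & (nat_of_ord k).-tuple 'I_d}.

Definition rv_seq d h (x : raw_vertex d h) : seq nat :=
  map (@nat_of_ord d) (tval (tagged x)).

Definition is_vertex d h (x : raw_vertex d h) : bool :=
  all (fun i => (i < d.-1)%N) (behead (rv_seq x)).

Definition vertex d h := {x : raw_vertex d h | is_vertex x}.

Definition vseq d h (v : vertex d h) : seq nat := rv_seq (val v).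

Definition is_child d h (u v : vertex d h) : bool :=
  (size (vseq v) == (size (vseq u)).+1) && (take (size (vseq u)) (vseq v) == vseq u).

Definition adjacent d h (u v : vertex d h) : bool := is_child u v || is_child v u.

Definition Delta d h (u v : vertex d h) : int :=
  (d%:Z * (u == v : nat)%:Z - (adjacent u v : nat)%:Z)%R.

(* ---------- The sandpile group G(d,h) = Z^V / Lambda ----------
   Elements of Z^V are functions V -> int; Lambda is the Z-span of the
   rows of Delta.  Two elements x, y of Z^V represent the same element of
   G(d,h) iff x - y lies in Lambda. *)
Definition in_lattice d h (x : vertex d h -> int) : Prop :=
  exists c : vertex d h -> int,
    forall w, x w = (\sum_(v : vertex d h) c v * Delta v w)%R.

(* [x] lies in the Hall t-subgroup of the finite abelian group G(d,h)
   (product of the Sylow p-subgroups, p | t): t^k [x] = 0 for some k. *)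
Definition in_hall_subgroup d h (t : nat) (x : vertex d h -> int) : Prop :=
  exists k : nat, in_lattice (fun w => ((t ^ k)%N%:Z * x w)%R).

Definition has_order d h (g : vertex d h -> int) (n : nat) : Prop :=
  [/\ (0 < n)%N,
      in_lattice (fun w => (n%:Z * g w)%R) &
      forall m : nat, (0 < m < n)%N -> ~ in_lattice (fun w => (m%:Z * g w)%R)].

Definition hall_subgroup_generated_by d h (t : nat) (g : vertex d h -> int) : Prop :=
  forall x : vertex d h -> int,
    in_hall_subgroup t x <-> exists m : int, in_lattice (fun w => (x w - m * g w)%R).

(* Main.v *)
Require Import Defs.
From mathcomp Require Import all_boot all_order all_algebra.
From mathcomp Require Import zify ring.
Set Implicit Arguments. Unset Strict Implicit. Unset Printing Implicit Defensive.
Import GRing.Theory Num.Theory.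

Section Tree.
Variables d h : nat.
Local Notation V := (vertex d h).

Definition dep (x : V) := size (vseq x).

Lemma dep_le (x : V) : (dep x <= h)%N.
Proof. case: x => [[k t] Hx]; rewrite /dep /vseq /rv_seq /= size_map size_tuple. by rewrite -ltnS. Qed.

Lemma vseq_inj : injective (@vseq d h).
Proof.
move=> [[k t] Hu] [[k' t'] Hv]; rewrite /vseq /rv_seq /= => e.
have ek : k = k'.
  by apply/val_inj; move: (congr1 size e); rewrite !size_map !size_tuple.
subst k'. have et : t = t' by apply/val_inj/(inj_map val_inj).
subst t'. by apply: val_inj.
Qed.

Lemma vseq_all (x : V) : all (fun i => (i < d.-1)%N) (behead (vseq x)).
Proof. by case: x. Qed.

Lemma vseq_ltd (x : V) : all (fun i => (i < d)%N) (vseq x).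
Proof. case: x => [[k t] Hx]; rewrite /vseq /rv_seq /=. by apply/allP => i /mapP [j _ ->]. Qed.

Definition mkraw (s : seq 'I_d) (Hs : (size s < h.+1)%N) : raw_vertex d h :=
  existT (fun k : 'I_h.+1 => (nat_of_ord k).-tuple 'I_d) (Ordinal Hs) (in_tuple s).

Definition vtuple (x : V) : seq 'I_d := tval (tagged (val x)).
Lemma vseqE (x : V) : vseq x = map val (vtuple x). Proof. by []. Qed.

Lemma is_child_dep (u v : V) : is_child u v -> dep v = (dep u).+1.
Proof. by case/andP => /eqP. Qed.

Definition inT (v x : V) := take (dep v) (vseq x) == vseq v.

Lemma inT_dep v x : inT v x -> (dep v <= dep x)%N.
Proof. move/eqP=> e; have := congr1 size e; rewrite size_take /dep.
case: ltnP => [/ltnW //| h1 h2]; by rewrite -h2. Qed.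

Lemma inT_refl v : inT v v. Proof. by rewrite /inT take_size. Qed.

Lemma inT_child a b v : is_child a b -> inT v a -> inT v b.
Proof.
case/andP=> _ /eqP ea it; have le := inT_dep it; move: it; rewrite /inT -ea.
by rewrite take_takel.
Qed.

Lemma inT_child2 x u v : is_child x u -> inT v u -> ~~ inT v x -> u = v.
Proof.
move=> c it; have le := inT_dep it; case/andP: c => /eqP ed /eqP ea.
case: (leqP (dep v) (dep x)) => [lvx|].
  by move/negP; case; rewrite /inT -ea take_takel.
move=> lxv _. have evu : dep v = dep u by move: le lxv; rewrite /dep ed; lia.
by apply: vseq_inj; move/eqP: it; rewrite evu /dep take_size => ->.
Qed.

Lemma inT_parent v x p : inT v x -> is_child p x -> x != v -> inT v p.
Proof.
move=> it c nxv; have le := inT_dep it; case/andP: c => /eqP ed /eqP ea.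
have lt : (dep v < dep x)%N.
  rewrite ltn_neqAle le andbT; apply: contra nxv => /eqP e.
  by apply/eqP/vseq_inj; move/eqP: it; rewrite e /dep take_size.
by rewrite /inT -ea take_takel // -ltnS -ed.
Qed.

Lemma not_inT_parent (v p : V) : is_child p v -> ~~ inT v p.
Proof. move=> c; apply/negP => /inT_dep; rewrite (is_child_dep c) ltnn. by []. Qed.

Lemma parent_uniq (p pp x : V) : is_child p x -> is_child pp x -> p = pp.
Proof.
case/andP=> /eqP e1 /eqP a1; case/andP=> /eqP e2 /eqP a2.
apply: vseq_inj; rewrite -a1 -a2; congr take; by apply/succn_inj; rewrite -e1 -e2.
Qed.

Lemma child_excl (u x : V) : is_child u x -> ~~ is_child x u.
Proof. move=> /is_child_dep e; apply/negP => /is_child_dep; rewrite e; lia. Qed.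


Lemma all_behead_take (a : pred nat) (s : seq nat) n :
  all a (behead s) -> all a (behead (take n s)).
Proof.
have allt : forall (t : seq nat) m, all a t -> all a (take m t).
  by move=> t m; rewrite -{1}(cat_take_drop m t) all_cat => /andP[].
by case: s n => [|y s] [|n] //= /allt.
Qed.

Definition root : V := @exist _ (@is_vertex d h) (@mkraw [::] (ltn0Sn h)) isT.

Lemma root_dep : dep root = 0%N. Proof. by []. Qed.

Lemma dep0_root (x : V) : dep x = 0%N -> x = root.
Proof. by move=> /size0nil e; apply: vseq_inj; rewrite e. Qed.

Lemma parent_ex (x : V) : (0 < dep x)%N -> exists p, is_child p x.
Proof.
move=> dx. have sz : size (vtuple x) = dep x by rewrite /dep vseqE size_map.
have Hs : (size (take (dep x).-1 (vtuple x)) < h.+1)%N.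
  by rewrite size_take sz; have := dep_le x; case: ifP => _; lia.
have Hv : is_vertex (mkraw Hs).
  rewrite /is_vertex /rv_seq /= map_take; apply: all_behead_take; exact: vseq_all.
exists (exist _ (mkraw Hs) Hv).
rewrite /is_child /vseq /= /rv_seq /= -!vseqE map_take size_take.
have -> : ((dep x).-1 < size (vseq x))%N by move: dx; rewrite /dep; lia.
rewrite eqxx andbT. apply/eqP; move: dx; rewrite /dep; lia.
Qed.

Definition chn (x : V) := if dep x == 0%N then d else d.-1.

Lemma chn_le x : (chn x <= d)%N.
Proof. rewrite /chn; case: ifP => _ //; exact: leq_pred. Qed.

Lemma chn_okn (x : V) n : (n < chn x)%N -> (dep x == 0%N) || (n < d.-1)%N.
Proof. by rewrite /chn; case: ifP => //= _ ->; rewrite orbT. Qed.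

Section Child.
Variables (x : V) (Hx : (dep x < h)%N).

Lemma child_size (i : 'I_d) : (size (rcons (vtuple x) i) < h.+1)%N.
Proof. by rewrite size_rcons ltnS /vtuple; move: Hx; rewrite /dep vseqE size_map. Qed.

Lemma child_valid (i : 'I_d) : (dep x == 0%N) || (i < d.-1)%N -> is_vertex (mkraw (child_size i)).
Proof.
move=> Hi; rewrite /is_vertex /rv_seq /= map_rcons -vseqE.
have := vseq_all x; move: Hi; rewrite /dep.
case: (vseq x) => [|y s] //= Hi Hall.
by rewrite all_rcons Hall andbT.
Qed.

Definition childv (i : 'I_d) Hi : V := @exist _ (@is_vertex d h) _ (@child_valid i Hi).

Lemma vseq_child i Hi : vseq (@childv i Hi) = rcons (vseq x) i.
Proof. by rewrite /vseq /rv_seq /= map_rcons. Qed.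

Lemma is_child_child i Hi : is_child x (@childv i Hi).
Proof.
by rewrite /is_child vseq_child size_rcons eqxx /= -cats1 take_size_cat.
Qed.

Lemma chn_ok (j : 'I_(chn x)) : (dep x == 0%N) || (widen_ord (chn_le x) j < d.-1)%N.
Proof. exact: (chn_okn (ltn_ord j)). Qed.

Definition fch (j : 'I_(chn x)) : V := childv (chn_ok j).

Lemma fch_inj : injective fch.
Proof.
move=> j k /(congr1 (@vseq d h)); rewrite !vseq_child => /rcons_inj [] e.
exact: val_inj.
Qed.

Lemma card_children : #|[pred u | is_child x u]| = chn x.
Proof.
rewrite -[RHS]card_ord -(card_imset _ fch_inj).
apply: eq_card => u; rewrite inE /=; apply/idP/imsetP.
- move=> c; case/andP: (c) => /eqP ed /eqP ea.
  set i := nth 0%N (vseq u) (dep x).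
  have ilt : (i < chn x)%N.
    rewrite /chn; case: ifP => [_|/negbT nz].
      have := vseq_ltd u; move/allP; apply; apply: mem_nth; rewrite ed /dep; lia.
    have := vseq_all u; move/allP; apply.
    rewrite /i -(prednK (n:=dep x)); last by rewrite lt0n.
    rewrite -nth_behead; apply: mem_nth; rewrite size_behead ed /dep.
    move: nz; rewrite /dep; lia.
  exists (Ordinal ilt) => //; apply: vseq_inj; rewrite vseq_child /=.
  rewrite -(take_oversize (n:=(dep x).+1) (s:=vseq u)); last by rewrite ed.
  rewrite (take_nth 0%N); last by rewrite ed /dep.
  by rewrite /dep ea.
- by case=> j _ ->; exact: is_child_child.
Qed.
End Child.

Local Open Scope ring_scope.

Definition qz : int := (d.-1)%:Z.
Definition S (n : nat) : int := \sum_(i < n) qz ^+ i.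
Definition W (j : nat) : int := S (h.+1 - j).

Lemma S_recl n : S n.+1 = 1 + qz * S n.
Proof. by rewrite /S big_ord_recl expr0 big_distrr; congr (_ + _); apply: eq_bigr => i _; rewrite exprS. Qed.

Lemma S_recr n : S n.+1 = S n + qz ^+ n.
Proof. by rewrite /S big_ord_recr. Qed.

Hypothesis Hd : (0 < d)%N.

Lemma dz : d%:Z = qz + 1.
Proof. by rewrite /qz -(prednK Hd) /= -addn1 PoszD. Qed.

Lemma W_idA j : (0 < j)%N -> (j <= h)%N -> d%:Z * W j - W j.+1 * qz = W j.-1.
Proof.
move=> j0 jh; rewrite /W.
have e1 : (h.+1 - j = (h - j).+1)%N by lia.
have e2 : (h.+1 - j.-1 = (h - j).+2)%N by lia.
have e3 : (h.+1 - j.+1 = (h - j))%N by lia.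
rewrite e1 e2 e3 !S_recl dz; ring.
Qed.

Lemma W_idB : d%:Z * W 0 - W 1 * d%:Z = d%:Z * qz ^+ h.
Proof. by rewrite /W subn0 subSS subn0 S_recr; ring. Qed.

Lemma W_big j : (h < j)%N -> W j = 0.
Proof. move=> hj; rewrite /W /S. have -> : (h.+1 - j = 0)%N by apply/eqP; rewrite subn_eq0. by rewrite big_ord0. Qed.

Lemma sum_split (F : V -> int) x :
  \sum_u F u * Delta u x = d%:Z * F x - (\sum_(u | is_child u x) F u) - \sum_(u | is_child x u) F u.
Proof.
under eq_bigr => u _ do rewrite /Delta mulrBr.
rewrite sumrB (bigD1 x) //= eqxx big1 ?addr0; last first.
  move=> u nu; rewrite (negbTE nu). by rewrite mulr0 mulr0.
have e : forall u, F u * (adjacent u x : nat)%:Z =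
   (if is_child u x then F u else 0) + (if is_child x u then F u else 0).
  move=> u; rewrite /adjacent; case c1: (is_child u x); case c2: (is_child x u) => //=.
  - by move: (child_excl c1); rewrite c2.
  - by rewrite mulr1 addr0.
  - by rewrite mulr1 add0r.
  - by rewrite mulr0 addr0.
under eq_bigr => u _ do rewrite e.
rewrite big_split /= -!big_mkcond /=; ring.
Qed.

Definition cv (v u : V) : int := if inT v u then W (dep u) else 0.

Lemma child_sum_const x :
  \sum_(u | is_child x u) W (dep x).+1 = W (dep x).+1 * (chn x)%:Z.
Proof.
case: (ltnP (dep x) h) => Hx.
  rewrite (eq_bigl [in [pred u | is_child x u]]) // sumr_const card_children //.
  by rewrite pmulrn mulrzz.
have ex : dep x = h by have := dep_le x; lia.
by rewrite ex W_big // mul0r big1.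
Qed.

Lemma parent_sum (F : V -> int) x p : is_child p x -> \sum_(u | is_child u x) F u = F p.
Proof.
move=> c; apply: big_pred1 => u /=; apply/idP/eqP => [c'|->//].
exact: parent_uniq c' c.
Qed.

Lemma root_parent_sum (F : V -> int) x : dep x = 0%N -> \sum_(u | is_child u x) F u = 0.
Proof. move=> e; apply: big_pred0 => u; apply/negP => /is_child_dep; by rewrite e. Qed.

Lemma children_notinT v x : ~~ inT v x ->
  \sum_(u | is_child x u) cv v u = if is_child x v then W (dep v) else 0.
Proof.
move=> nx.
rewrite (eq_bigr (fun u => if u == v then W (dep v) else 0)); last first.
  move=> u c; rewrite /cv; case: ifP => it.
    by rewrite (inT_child2 c it nx) eqxx.
  by case: eqP => // e; move: it; rewrite e inT_refl.
rewrite -big_mkcondr /=; case: ifP => c.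
  by rewrite (big_pred1 v) // => u /=; case: eqP => [->|_]; rewrite ?andbF ?andbT ?c.
apply: big_pred0 => u; apply/andP => [[c' /eqP e]]; by move: c; rewrite -e c'.
Qed.

Definition Ev (v : V) : int := if dep v == 0%N then d%:Z * qz ^+ h else W (dep v).-1.

Lemma key_sum v x : \sum_u cv v u * Delta u x =
  (if x == v then Ev v else 0) - (if is_child x v then W (dep v) else 0).
Proof.
rewrite sum_split.
case itx: (inT v x).
- have cs : \sum_(u | is_child x u) cv v u = W (dep x).+1 * (chn x)%:Z.
    rewrite -child_sum_const; apply: eq_bigr => u c.
    by rewrite /cv (inT_child c itx) (is_child_dep c).
  have nc : is_child x v = false.
    apply/negP => c; have := inT_dep itx; rewrite (is_child_dep c); lia.
  rewrite cs nc subr0 {1}/cv itx.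
  case: (posnP (dep x)) => [dx0|dxp].
  + rewrite root_parent_sum // subr0.
    have dv0 : dep v = 0%N by have := inT_dep itx; lia.
    have exv : x = v by rewrite (dep0_root dx0) (dep0_root dv0).
    subst x; rewrite eqxx /Ev /chn dv0 /=. exact: W_idB.
  + have [p c] := parent_ex dxp; rewrite (parent_sum _ c).
    have dp : dep x = (dep p).+1 := is_child_dep c.
    have jh := dep_le x.
    case: eqP => [exv|nexv].
    * subst x; rewrite /cv (negbTE (not_inT_parent c)) subr0 /Ev /chn.
      have -> : (dep v == 0%N) = false by rewrite dp.
      by rewrite W_idA.
    * rewrite /cv (inT_parent itx c (introN eqP nexv)) /chn.
      have -> : (dep x == 0%N) = false by rewrite dp.
      have := W_idA dxp jh; rewrite dp /= => <-; ring.
- rewrite {1}/cv itx mulr0 add0r.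
  have -> : (x == v) = false by apply/negP => /eqP e; move: itx; rewrite e inT_refl.
  rewrite children_notinT ?itx //.
  case: (posnP (dep x)) => [dx0|dxp].
    by rewrite root_parent_sum // oppr0 sub0r.
  have [p c] := parent_ex dxp; rewrite (parent_sum _ c).
  have -> : cv v p = 0.
    by rewrite /cv; case: ifP => // it; move: itx; rewrite (inT_child c it).
  by rewrite oppr0 sub0r.
Qed.

Definition ind (v w : V) : int := if w == v then 1 else 0.

Lemma lat_ext (f g : V -> int) : in_lattice f -> (forall w, f w = g w) -> in_lattice g.
Proof. by case=> c Hc e; exists c => w; rewrite -e Hc. Qed.

Lemma latD (f g : V -> int) : in_lattice f -> in_lattice g -> in_lattice (fun w => f w + g w).
Proof.
case=> c Hc [c' Hc']; exists (fun v => c v + c' v) => w.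
rewrite Hc Hc' -big_split; apply: eq_bigr => v _; by rewrite mulrDl.
Qed.

Lemma latZ a (f : V -> int) : in_lattice f -> in_lattice (fun w => a * f w).
Proof.
case=> c Hc; exists (fun v => a * c v) => w; rewrite Hc big_distrr.
by apply: eq_bigr => v _ /=; rewrite mulrA.
Qed.

Lemma latB (f g : V -> int) : in_lattice f -> in_lattice g -> in_lattice (fun w => f w - g w).
Proof. move=> Hf Hg; apply: lat_ext (latD Hf (latZ (-1) Hg)) _ => w; by rewrite mulN1r. Qed.

Lemma lat0 : in_lattice (fun _ : V => 0).
Proof. by exists (fun _ => 0) => w; rewrite big1 // => v _; rewrite mul0r. Qed.

Lemma lat_sum (F : V -> V -> int) : (forall v, in_lattice (F v)) -> in_lattice (fun w => \sum_v F v w).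
Proof.
move=> H.
have H' : forall v, exists c : V -> int, forall w, F v w = \sum_u c u * Delta u w := H.
have [c Hc] := fin_all_exists H'.
exists (fun u => \sum_v c v u) => w.
rewrite (eq_bigr _ (fun v _ => Hc v w)) exchange_big; apply: eq_bigr => u _.
by rewrite mulr_suml.
Qed.

Lemma Delta_sym (u v : V) : Delta u v = Delta v u.
Proof. by rewrite /Delta eq_sym /adjacent orbC. Qed.

Lemma inT_root x : inT root x.
Proof. by rewrite /inT root_dep take0. Qed.

Lemma lat_cv v : in_lattice (fun x => (if x == v then Ev v else 0) - (if is_child x v then W (dep v) else 0)).
Proof. by exists (cv v) => w; rewrite key_sum. Qed.

Lemma not_child_root (u : V) : is_child u root = false.
Proof. by apply/negP => /is_child_dep; rewrite root_dep. Qed.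

Definition phi (y : V -> int) := \sum_x W (dep x) * y x.

Lemma phiZB a b (f g : V -> int) : phi (fun w => a * f w - b * g w) = a * phi f - b * phi g.
Proof.
rewrite /phi !big_distrr -sumrB; apply: eq_bigr => x _ /=; ring.
Qed.

Lemma phi_ext (f g : V -> int) : (forall w, f w = g w) -> phi f = phi g.
Proof. by move=> e; apply: eq_bigr => x _; rewrite e. Qed.

Lemma phi_ind : phi (ind root) = W 0.
Proof.
rewrite /phi (bigD1 root) //= big1 => [|u nu]; first by rewrite /ind eqxx root_dep mulr1 addr0.
by rewrite /ind (negbTE nu) mulr0.
Qed.

Lemma phi_lat y : in_lattice y -> (qz ^+ h %| phi y)%Z.
Proof.
case=> c Hc.
have e : forall u, \sum_x W (dep x) * Delta u x = if u == root then d%:Z * qz ^+ h else 0.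
  move=> u; transitivity (\sum_x cv root x * Delta x u).
    by apply: eq_bigr => x _; rewrite /cv inT_root Delta_sym.
  by rewrite key_sum not_child_root subr0 /Ev root_dep.
have -> : phi y = \sum_u c u * (\sum_x W (dep x) * Delta u x).
  rewrite /phi; under eq_bigr => x _ do rewrite Hc big_distrr /=.
  rewrite exchange_big /=; apply: eq_bigr => u _; rewrite big_distrr /=.
  by apply: eq_bigr => x _; ring.
under eq_bigr => u _ do rewrite e.
rewrite (bigD1 root) //= eqxx big1 => [|u /negbTE -> ]; last by rewrite mulr0.
by rewrite addr0; apply: dvdz_mull; apply: dvdz_mull; apply: dvdzz.
Qed.

Definition P j : int := \prod_(0 <= i < j) W i.

Lemma K1 j : forall v : V, dep v = j -> exists a, in_lattice (fun w => P j * ind v w - a * ind root w).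
Proof.
elim: j => [|j IH] v dv.
  exists 1; rewrite (dep0_root dv); apply: lat_ext lat0 _ => w.
  by rewrite /P big_geq // mul1r subrr.
have [p c] : exists p, is_child p v by apply: parent_ex; rewrite dv.
have dp : dep p = j by apply: succn_inj; rewrite -dv (is_child_dep c).
have [a Ha] := IH p dp.
exists (W j.+1 * a).
apply: lat_ext (latD (latZ (P j) (lat_cv v)) (latZ (W j.+1) Ha)) _ => w /=.
have ic : is_child w v = (w == p).
  by apply/idP/eqP => [c'|->//]; exact: parent_uniq c' c.
rewrite ic /Ev dv /= /P big_nat_recr //= -/(P j) /ind.
case: (w == v); case: (w == p); case: (w == root); rewrite /=; ring.
Qed.

Lemma K2 (v : V) : exists a, in_lattice (fun w => P h.+1 * ind v w - a * ind root w).
Proof.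
have [a Ha] := K1 (erefl (dep v)).
have jl := dep_le v.
pose K := \prod_(dep v <= i < h.+1) W i.
have eP : P h.+1 = P (dep v) * K by rewrite /P -big_cat_nat //; lia.
exists (K * a); apply: lat_ext (latZ K Ha) _ => w; rewrite eP; ring.
Qed.

Lemma K3 (y : V -> int) : exists A, in_lattice (fun w => P h.+1 * y w - A * ind root w).
Proof.
have H : forall v, exists a : int, in_lattice (fun w => P h.+1 * ind v w - a * ind root w) := K2.
have [a Ha] := fin_all_exists H.
exists (\sum_v y v * a v).
apply: lat_ext (lat_sum (fun v => latZ (y v) (Ha v))) _ => w /=.
under eq_bigr => v _ do rewrite mulrBr.
rewrite sumrB; congr (_ - _).
  rewrite (bigD1 w) //= big1 => [|v nv]; first by rewrite /ind eqxx addr0; ring.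
  by rewrite /ind eq_sym (negbTE nv) !mulr0.
by rewrite mulr_suml; apply: eq_bigr => v _; ring.
Qed.

Lemma W_cop j : (j <= h)%N -> coprimez (W j) qz.
Proof.
move=> jh; apply/coprimezP; rewrite /W.
have -> : (h.+1 - j = (h - j).+1)%N by lia.
by exists (1, - S (h - j)) => /=; rewrite S_recl; ring.
Qed.

Lemma P_cop j : (j <= h.+1)%N -> coprimez (P j) qz.
Proof.
elim: j => [|j IH] jl; first by rewrite /P big_geq // coprimezE /= coprime1n.
rewrite /P big_nat_recr //= -/(P j) coprimezMl IH ?W_cop //; lia.
Qed.

Lemma d_cop : coprimez d%:Z qz.
Proof. by apply/coprimezP; exists (1, -1) => /=; rewrite dz; ring. Qed.

Lemma main_sec : (2 < d)%N ->
  exists g : V -> int, hall_subgroup_generated_by (d - 1) g /\ has_order g ((d - 1) ^ h).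
Proof.
move=> Hd3.
pose g := fun w => d%:Z * ind root w.
have qE : forall k, ((d - 1) ^ k)%N%:Z = qz ^+ k.
  by move=> k; rewrite -natz natrX natz subn1.
have Lg : in_lattice (fun w => qz ^+ h * g w).
  apply: lat_ext (lat_cv root) _ => w.
  rewrite /Ev root_dep /= /g /ind.
  by case: (w == root); ring.
have phig : phi g = d%:Z * W 0.
  rewrite (@phi_ext _ (fun w => d%:Z * ind root w - 0 * ind root w)); last by move=> w; rewrite mul0r subr0.
  by rewrite phiZB phi_ind mul0r subr0.
have cop0 : coprimez (d%:Z * W 0) qz by rewrite coprimezMl d_cop W_cop.
exists g; split.
- move=> x; split.
  + case=> k Hk.
    have Hk' : in_lattice (fun w => qz ^+ k * x w) by apply: lat_ext Hk _ => w; rewrite qE.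
    have [[al be] /= Hab] : exists uv : int * int, uv.1 * (d%:Z * W 0) + uv.2 * qz ^+ h = 1.
      by apply/coprimezP; exact: coprimezXr.
    exists (al * phi x).
    pose y := fun w => 1 * x w - (al * phi x) * g w.
    have phiy : phi y = phi x * be * qz ^+ h.
      rewrite /y phiZB phig.
      have e : be * qz ^+ h = 1 - al * (d%:Z * W 0) by rewrite -Hab; ring.
      transitivity (phi x * (1 - al * (d%:Z * W 0))); first by ring.
      by rewrite -e; ring.
    have [A HA] := K3 y.
    have dA : (qz ^+ h %| A)%Z.
      have := phi_lat HA; rewrite phiZB phi_ind phiy => H1.
      have H2 : (qz ^+ h %| P h.+1 * (phi x * be * qz ^+ h))%Z.
        by apply: dvdz_mull; apply: dvdz_mull; apply: dvdzz.
      have H3 : (qz ^+ h %| A * W 0)%Z.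
        have -> : A * W 0 = P h.+1 * (phi x * be * qz ^+ h) - (P h.+1 * (phi x * be * qz ^+ h) - A * W 0) by ring.
        exact: rpredB.
      move: H3; rewrite Gauss_dvdzl //.
      by apply: coprimezXl; rewrite coprimez_sym W_cop.
    have [B eB] := dvdzP dA.
    have L1 : in_lattice (fun w => (d%:Z * P h.+1) * y w).
      apply: lat_ext (latD (latZ d%:Z HA) (latZ B Lg)) _ => w.
      by rewrite eB /g; ring.
    have L2 : in_lattice (fun w => qz ^+ (k + h) * y w).
      apply: lat_ext (latB (latZ (qz ^+ h) Hk') (latZ (qz ^+ k * (al * phi x)) Lg)) _ => w.
      by rewrite /y exprD; ring.
    have cop2 : coprimez (d%:Z * P h.+1) (qz ^+ (k + h)).
      by apply: coprimezXr; rewrite coprimezMl d_cop P_cop.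
    have [[u v] /= Huv] := coprimezP _ _ cop2.
    apply: lat_ext (latD (latZ u L1) (latZ v L2)) _ => w.
    transitivity ((u * (d%:Z * P h.+1) + v * qz ^+ (k + h)) * y w); first by ring.
    by rewrite Huv mul1r /y mul1r.
  + case=> m Hm; exists h.
    apply: lat_ext (latD (latZ (qz ^+ h) Hm) (latZ m Lg)) _ => w.
    by rewrite qE; ring.
- split.
  + by rewrite expn_gt0; apply/orP; left; lia.
  + by apply: lat_ext Lg _ => w; rewrite qE.
  + move=> n /andP [n0 nlt] Hn.
    have := phi_lat Hn.
    rewrite (@phi_ext _ (fun w => n%:Z * g w - 0 * g w)); last by move=> w; rewrite mul0r subr0.
    rewrite phiZB phig mul0r subr0.
    rewrite Gauss_dvdzl; last by apply: coprimezXl; rewrite coprimez_sym.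
    rewrite -qE dvdzE /= => /(dvdn_leq n0); move: nlt; lia.
Qed.

End Tree.

Theorem theorem2p8 (d h : nat) :
  (3 <= d)%N -> (1 <= h)%N ->
  exists g : vertex d h -> int,
    hall_subgroup_generated_by (d - 1) g /\ has_order g ((d - 1) ^ h).
Proof.
move=> Hd _; apply: main_sec => //; lia.
Qed.
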